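(* Consider one seller with one item and $n$ ex-interim rational buyers $N=\{1,\dots,n\}$; the item's quality $q\in Q=[q_1,q_2]$ has density $g$ and is observed only by the seller; buyer $i$'s valuation is $v_i(q)\ge0$. Let $\pi$ satisfy $\pi(q,s_i)\ge0$ for $i\in\{0,\dots,n\}$ and $\sum_{i\in N}\pi(q,s_i)+\pi(q,s_0)=1$ for all $q$, and let $p$ be such that for all $i\in N$: $\int_Q\pi(q,s_i)[v_i(q)-p]g(q)\,\mathrm{d}q\ge0$ and $\int_Q\pi(q,s_i)[v_i(q)-p]g(q)\,\mathrm{d}q\ge\mathbb{E}_q[v_i(q)]-p$. Then $Rev_{sig}(\pi,p)=p\int_Q\sum_{i\in N}\pi(q,s_i)g(q)\,\mathrm{d}q\le\mathbb{E}_q[v_{max}(q)]$, where $v_{max}(q)=\max_i v_i(q)$.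
   Context: Signal $s_i$ ($i\in N$) recommends buyer $i$ to buy and others not to buy; $s_0$ recommends no one to buy. The constraints express obedience of ex-interim rational buyers, who buy iff their posterior expected valuation is at least $p$. $\mathbb{E}_q$ is expectation under the prior density $g$. *)

(* Defs.v *)
From HB Require Import structures.
From mathcomp Require Import all_boot all_order all_algebra.
From mathcomp Require Import all_classical all_reals all_analysis.
Set Implicit Arguments. Unset Strict Implicit. Unset Printing Implicit Defensive.
Import Order.TTheory GRing.Theory Num.Theory.

(* Main.v *)
Require Import Defs.
From HB Require Import structures.
From mathcomp Require Import all_boot all_order all_algebra.
From mathcomp Require Import all_classical all_reals all_analysis.
From mathcomp Require Import measurable_realfun.
From mathcomp Require Import ring lra.
Import Order.TTheory GRing.Theory Num.Theory.
Local Open Scope classical_set_scope.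
Local Open Scope ring_scope.

Lemma Rint_sum_aux (R : realType) (D : set R) (I : Type) (s : seq I)
  (h : I -> R -> R) : measurable D ->
  (forall i, (@lebesgue_measure R).-integrable D (EFin \o h i)) ->
  (@lebesgue_measure R).-integrable D (EFin \o (fun q => \sum_(i <- s) h i q)) /\
  Rintegral (@lebesgue_measure R) D (fun q => \sum_(i <- s) h i q)
   = \sum_(i <- s) Rintegral (@lebesgue_measure R) D (h i).
Proof.
move=> mD hi; elim: s => [|a s [IHi IHe]].
  have -> : (fun q => \sum_(i <- [::]) h i q) = fun _ => 0.
    by apply/funext => q; rewrite big_nil.
  rewrite big_nil; split; first exact: integrable0.
  by rewrite Rintegral_cst // mul0r.
have -> : (fun q => \sum_(i <- a :: s) h i q) = fun q => h a q + \sum_(i <- s) h i q.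
  by apply/funext => q; rewrite big_cons.
rewrite big_cons; split.
  apply: (@eq_integrable _ _ _ (@lebesgue_measure R) D mD ((EFin \o h a) \+ (EFin \o fun q => \sum_(i <- s) h i q))).
    by move=> x _ /=; rewrite EFinD.
  exact: integrableD.
by rewrite RintegralD // IHe.
Qed.

Lemma dom_int (R : realType) (D : set R) (f g : R -> R) : measurable D ->
  measurable_fun D f ->
  (@lebesgue_measure R).-integrable D (EFin \o g) ->
  (forall q, D q -> `|f q| <= `|g q|) ->
  (@lebesgue_measure R).-integrable D (EFin \o f).
Proof.
move=> mD mf gi fg; apply: (@le_integrable _ _ _ (@lebesgue_measure R) D mD (EFin \o f) (EFin \o g) _ _ gi).
  exact/measurable_EFinP.
by move=> x Dx /=; rewrite lee_fin fg.
Qed.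

Lemma intZ (R : realType) (D : set R) (f : R -> R) k : measurable D ->
  (@lebesgue_measure R).-integrable D (EFin \o f) ->
  (@lebesgue_measure R).-integrable D (EFin \o (fun q => k * f q)).
Proof.
move=> mD fi.
have h := (@integrableZl _ _ _ (@lebesgue_measure R) D mD k _ fi).
move: h; apply: eq_integrable => //.
Qed.

Lemma meas_bigmax (R : realType) (D : set R) (I : Type) (s : seq I)
  (h : I -> R -> R) : (forall i, measurable_fun D (h i)) ->
  measurable_fun D (fun x => \big[Num.max/0]_(i <- s) h i x).
Proof.
move=> mh; elim: s => [|a s IH].
  rewrite (_ : (fun x => _) = cst 0); first exact: measurable_cst.
  by apply/funext => x; rewrite big_nil.
rewrite (_ : (fun x => _) = (h a) \max (fun x => \big[Num.max/0]_(i <- s) h i x)).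
  exact: measurable_maxr.
by apply/funext => x; rewrite big_cons.
Qed.

(* Buyers are indexed by 'I_n; pi i q = pi(q, s_i), pi0 q = pi(q, s_0). *)
Theorem mainTheorem10 (R : realType) (n : nat) (q1 q2 : R) (g : R -> R)
  (v : 'I_n -> R -> R) (pi : 'I_n -> R -> R) (pi0 : R -> R) (p : R) :
  let Q := `[q1, q2]%classic in
  let mu := @lebesgue_measure R in
  measurable_fun Q g ->
  (forall q, Q q -> 0 <= g q) ->
  (\int[mu]_(q in Q) (g q)%:E = 1)%E ->
  (forall i, measurable_fun Q (v i)) ->
  (forall i q, Q q -> 0 <= v i q) ->
  (forall i, mu.-integrable Q (fun q => (v i q * g q)%:E)) ->
  (forall i, measurable_fun Q (pi i)) ->
  measurable_fun Q pi0 ->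
  (forall i q, Q q -> 0 <= pi i q) ->
  (forall q, Q q -> 0 <= pi0 q) ->
  (forall q, Q q -> \sum_(i < n) pi i q + pi0 q = 1) ->
  (forall i, 0 <= Rintegral mu Q (fun q => pi i q * (v i q - p) * g q)) ->
  (forall i, Rintegral mu Q (fun q => v i q * g q) - p
             <= Rintegral mu Q (fun q => pi i q * (v i q - p) * g q)) ->
  p * Rintegral mu Q (fun q => \sum_(i < n) pi i q * g q)
    <= Rintegral mu Q (fun q => (\big[Num.max/0]_(i < n) v i q) * g q).
Proof.
move=> Q mu mg g0 g1 mv v0 vgi mpi mpi0 pi0_ pi00 pisum H1 _.
have mQ : measurable Q by exact: measurable_itv.
have gi : mu.-integrable Q (EFin \o g).
  apply/integrableP; split; first exact/measurable_EFinP.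
  rewrite (@eq_integral _ _ _ mu Q (fun q => (g q)%:E)); first by rewrite g1 ltry.
  by move=> x; rewrite inE => Qx /=; rewrite ger0_norm // g0.
have pi1 : forall i q, Q q -> pi i q <= 1.
  move=> i q Qq; rewrite -(pisum q Qq) (bigD1 i) //= -addrA lerDl.
  by rewrite addr_ge0 ?pi00 // sumr_ge0 // => j _; exact: pi0_.
have ipg : forall i, mu.-integrable Q (EFin \o (fun q => pi i q * g q)).
  move=> i; apply: (@dom_int R Q _ g mQ _ gi).
    exact: measurable_funM.
  move=> q Qq; rewrite normrM ger0_norm ?pi0_ //.
  by rewrite -[X in _ <= X]mul1r ler_wpM2r ?normr_ge0 ?pi1.
have ipvg : forall i, mu.-integrable Q (EFin \o (fun q => pi i q * v i q * g q)).
  move=> i; apply: (@dom_int R Q _ (fun q => v i q * g q) mQ _ (vgi i)).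
    by apply: measurable_funM => //; exact: measurable_funM.
  move=> q Qq; rewrite -mulrA normrM ger0_norm ?pi0_ //.
  by rewrite -[X in _ <= X]mul1r ler_wpM2r ?normr_ge0 ?pi1.
have key : forall i, Rintegral mu Q (fun q => pi i q * (v i q - p) * g q)
   = Rintegral mu Q (fun q => pi i q * v i q * g q)
     - p * Rintegral mu Q (fun q => pi i q * g q).
  move=> i.
  rewrite -RintegralZl //.
  rewrite -RintegralB //; last first.
    exact: intZ.
  by apply: eq_Rintegral => q _; rewrite /=; ring.
have [_ ->] := Rint_sum_aux _ _ _ (index_enum 'I_n) _ mQ ipg.
rewrite mulr_sumr.
apply: (@le_trans _ _ (\sum_(i < n) Rintegral mu Q (fun q => pi i q * v i q * g q))).
  by apply: ler_sum => i _; rewrite -subr_ge0 -key; exact: H1.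
have [ivs <-] := Rint_sum_aux _ _ _ (index_enum 'I_n) _ mQ ipvg.
have [ivg _] := Rint_sum_aux _ _ _ (index_enum 'I_n) _ mQ vgi.
have vmax0 : forall q, 0 <= \big[Num.max/0]_(i < n) v i q.
  by move=> q; exact: bigmax_ge_id.
apply: le_Rintegral => //.
  apply: (@dom_int R Q _ (fun q => \sum_(i < n) v i q * g q) mQ _ ivg).
    apply: measurable_funM => //; exact: meas_bigmax.
  move=> q Qq; rewrite ger0_norm ?mulr_ge0 ?g0 // ger0_norm; last first.
    by rewrite sumr_ge0 // => i _; rewrite mulr_ge0 ?v0 ?g0.
  rewrite -mulr_suml ler_wpM2r ?g0 //; apply: bigmax_le.
    by rewrite sumr_ge0 // => i _; rewrite v0.
  move=> i _; rewrite (bigD1 i) //= lerDl sumr_ge0 // => j _; exact: v0.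
move=> q Qq.
apply: (@le_trans _ _ (\sum_(i < n) pi i q * ((\big[Num.max/0]_(i < n) v i q) * g q))).
  apply: ler_sum => i _; rewrite -mulrA ler_wpM2l ?pi0_ // ler_wpM2r ?g0 //.
  exact: le_bigmax.
rewrite -mulr_suml -[X in _ <= X]mul1r ler_wpM2r ?mulr_ge0 ?g0 //.
by rewrite -(pisum q Qq) lerDl pi00.
Qed.
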